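(* Let $j\in\mathbb{N}$ and $b,r\in\mathbb{Z}$ with $b\neq0$. Then for every $x\in\mathbb{R}$, $$\sum_{d=-\infty}^{+\infty}\frac{e^{2\pi \mathrm{i} dx}}{\left(d+\frac{r}{b}-\frac{1}{2b}\right)^{j}}=\frac{(2\pi \mathrm{i})^{j}\,\mathrm{sgn}(b)}{2\,(j-1)!\,b^{1-j}}\sum_{l=0}^{|b|-1}e^{-\frac{2\pi \mathrm{i}(l+x)r}{b}+\frac{\pi \mathrm{i}(l+x)}{b}}\,\overline{E}_{j-1}\!\left(\frac{l+x}{b}\right).$$
   Context: $\mathrm{i}^2=-1$. Doubly infinite sums $\sum_{d=-\infty}^{+\infty}$ are interpreted as $\lim_{N\to\infty}\sum_{d=-N}^{N}$ (this matters for $j=1$). $[x]$ is the floor of $x$, $\{x\}=x-[x]$, $E_n(x)$ is the Euler polynomial ($\frac{2e^{xt}}{e^t+1}=\sum_{n\ge0}E_n(x)\frac{t^n}{n!}$). Quasi-periodic Euler functions: $\overline{E}_{0}(x)=(-1)^{[x]}$ if $x\notin\mathbb{Z}$ and $\overline{E}_0(x)=0$ if $x\in\mathbb{Z}$; $\overline{E}_{n}(x)=(-1)^{[x]}E_{n}(\{x\})$ for $n\ge1$. $\mathrm{sgn}(b)=b/|b|$. *)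

(* Defs.v *)
From Stdlib Require Import Reals ZArith.
From Coquelicot Require Import Coquelicot.
Open Scope R_scope.

Definition cis (t : R) : C := (cos t, sin t).

Definition Ci : C := (0, 1).

Definition is_Euler_poly (E : nat -> R -> R) : Prop :=
  forall x t : R, Rabs t < PI ->
    is_series (fun n => E n x * t ^ n / INR (fact n))
              (2 * exp (x * t) / (exp t + 1)).

Definition floorR (x : R) : Z := (up x - 1)%Z.
Definition fracR (x : R) : R := x - IZR (floorR x).

Definition Ebar (E : nat -> R -> R) (n : nat) (x : R) : R :=
  match n with
  | O => if Req_EM_T x (IZR (floorR x)) then 0 else (-1) ^ Z.abs_nat (floorR x) * 1
  | S _ => (-1) ^ Z.abs_nat (floorR x) * E n (fracR x)
  end.

Definition sgnZ (b : Z) : R := IZR b / IZR (Z.abs b).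

Definition sym_partial (f : Z -> C) (N : nat) : C :=
  sum_n (fun k => f (Z.of_nat k - Z.of_nat N)%Z) (2 * N).

(* Main.v *)
Require Import Defs.
From Stdlib Require Import Reals ZArith Lra Lia.
From Coquelicot Require Import Coquelicot.
Open Scope R_scope.

Lemma is_series_ext_R (a b : nat -> R) (l : R) :
  (forall n, a n = b n) -> is_series a l -> is_series b l.
Proof. apply is_series_ext. Qed.

Lemma cv_radius_gt (a : nat -> R) (t t' : R) :
  Rabs t < t' -> ex_series (fun n => a n * t' ^ n) -> Rbar_lt (Rabs t) (CV_radius a).
Proof.
  intros Ht Hs.
  assert (H1 : Rbar_le (Rabs t') (CV_radius a)).
  { apply Rbar_not_lt_le. intros Hc. apply (CV_disk_outside a t' Hc).
    apply ex_series_lim_0. exact Hs. }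
  assert (0 <= t') by (pose proof (Rabs_pos t); lra).
  rewrite Rabs_pos_eq in H1 by lra.
  destruct (CV_radius a) as [c| |]; simpl in *; lra || auto.
Qed.

Lemma ps_coef_unique (a b : nat -> R) (rho : R) : 0 < rho ->
  (forall t, Rabs t < rho -> exists l, is_series (fun n => a n * t^n) l /\
                                  is_series (fun n => b n * t^n) l) ->
  forall n, a n = b n.
Proof.
  intros Hr H n.
  assert (Hra : forall t, Rabs t < rho -> Rbar_lt (Rabs t) (CV_radius a)).
  { intros t Ht. apply (cv_radius_gt a t ((Rabs t + rho)/2)); [lra|].
    destruct (H ((Rabs t + rho)/2)) as [l [H1 _]].
    { rewrite Rabs_pos_eq; pose proof (Rabs_pos t); lra. }
    eexists; exact H1. }
  assert (Hrb : forall t, Rabs t < rho -> Rbar_lt (Rabs t) (CV_radius b)).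
  { intros t Ht. apply (cv_radius_gt b t ((Rabs t + rho)/2)); [lra|].
    destruct (H ((Rabs t + rho)/2)) as [l [_ H1]].
    { rewrite Rabs_pos_eq; pose proof (Rabs_pos t); lra. }
    eexists; exact H1. }
  assert (Ha0 : Rbar_lt 0 (CV_radius a)).
  { rewrite <- Rabs_R0. apply Hra. rewrite Rabs_R0; lra. }
  assert (Hb0 : Rbar_lt 0 (CV_radius b)).
  { rewrite <- Rabs_R0. apply Hrb. rewrite Rabs_R0; lra. }
  pose proof (Derive_n_coef a n Ha0) as Da.
  pose proof (Derive_n_coef b n Hb0) as Db.
  assert (Heq : Derive_n (PSeries a) n 0 = Derive_n (PSeries b) n 0).
  { apply Derive_n_ext_loc. exists (mkposreal rho Hr). intros t Ht.
    assert (Ht' : Rabs t < rho).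
    { revert Ht. unfold ball; simpl; unfold AbsRing_ball, abs, minus, plus, opp; simpl.
      rewrite Ropp_0, Rplus_0_r. auto. }
    destruct (H t Ht') as [l [H1 H2]].
    rewrite (is_pseries_unique a t l); [|apply is_pseries_R; exact H1].
    rewrite (is_pseries_unique b t l); [|apply is_pseries_R; exact H2]. reflexivity. }
  rewrite Da, Db in Heq.
  pose proof (INR_fact_neq_0 n).
  apply Rmult_eq_reg_r with (INR (fact n)); auto.
Qed.

Lemma poly_derive (c : nat -> R) (m : nat) (x : R) :
  is_derive (fun y => sum_f_R0 (fun k => c k * y ^ k) (S m)) x
            (sum_f_R0 (fun k => c (S k) * INR (S k) * x ^ k) m).
Proof.
  induction m.
  - simpl. auto_derive; auto. ring.
  - apply (is_derive_ext (fun y => sum_f_R0 (fun k => c k * y ^ k) (S m) + c (S (S m)) * y ^ (S (S m)))).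
    { intros t. reflexivity. }
    replace (sum_f_R0 (fun k => c (S k) * INR (S k) * x ^ k) (S m)) with
      (sum_f_R0 (fun k => c (S k) * INR (S k) * x ^ k) m + c (S (S m)) * (INR (S (S m)) * x ^ (S m))).
    + apply (is_derive_plus (fun y => sum_f_R0 (fun k => c k * y ^ k) (S m)) (fun y => c (S (S m)) * y ^ (S (S m)))). exact IHm.
      apply (is_derive_scal (fun y => y ^ (S (S m)))).
      auto_derive; auto. simpl. ring.
    + rewrite tech5. ring.
Qed.

Section Euler.
Variable E : nat -> R -> R.
Hypothesis HE : is_Euler_poly E.

Lemma E_series (x t : R) : Rabs t < PI ->
  is_series (fun n => (E n x / INR (fact n)) * t ^ n) (2 * exp (x * t) / (exp t + 1)).
Proof.
  intros Ht. eapply is_series_ext_R; [|apply (HE x t Ht)].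
  intros n; simpl. field. apply INR_fact_neq_0.
Qed.

Lemma E0 (x : R) : E 0 x = 1.
Proof.
  assert (H : Rabs 0 < PI) by (rewrite Rabs_R0; apply PI_RGT_0).
  pose proof (E_series x 0 H) as Hs.
  rewrite Rmult_0_r, exp_0 in Hs.
  assert (Hs2 : is_series (fun n => (E n x / INR (fact n)) * 0 ^ n) (E 0 x)).
  { apply (is_series_ext (fun n => match n with O => E 0 x | S _ => 0 end)).
    - intros [|n]; simpl; [field | ring].
    - unfold is_series. apply filterlim_ext with (fun _ => E 0 x).
      + intros n. induction n.
        * rewrite sum_O. reflexivity.
        * rewrite sum_Sn, <- IHn. unfold plus; simpl; ring.
      + apply filterlim_const. }
  apply is_series_unique in Hs. apply is_series_unique in Hs2.
  rewrite <- Hs2, Hs. field.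
Qed.

Lemma E01 (n : nat) : (1 <= n)%nat -> E n 0 + E n 1 = 0.
Proof.
  intros Hn.
  set (a := fun n => (E n 0 + E n 1) / INR (fact n)).
  set (b := fun n : nat => match n with O => 2 | S _ => 0 end).
  assert (H : forall n, a n = b n).
  { apply (ps_coef_unique a b PI PI_RGT_0). intros t Ht. exists 2. split.
    - pose proof (is_series_plus _ _ _ _ (E_series 0 t Ht) (E_series 1 t Ht)) as Hp.
      replace 2 with (2 * exp (0 * t) / (exp t + 1) + 2 * exp (1 * t) / (exp t + 1)).
      + eapply is_series_ext_R; [|exact Hp]. intros k. unfold a, plus; simpl. field. apply INR_fact_neq_0.
      + rewrite Rmult_0_l, Rmult_1_l, exp_0. field. pose proof (exp_pos t). lra.
    - unfold is_series. apply filterlim_ext with (fun _ => 2).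
      + intros m. induction m.
        * rewrite sum_O. unfold b. simpl. ring.
        * rewrite sum_Sn, <- IHm. unfold plus, b; simpl; ring.
      + apply filterlim_const. }
  specialize (H n). unfold a, b in H. destruct n as [|n]; [lia|].
  pose proof (INR_fact_neq_0 (S n)).
  apply (Rmult_eq_compat_r (INR (fact (S n)))) in H. field_simplify in H; auto; lra.
Qed.

Definition Ec (n k : nat) : R := INR (fact n) / (INR (fact k) * INR (fact (n - k))) * E (n - k)%nat 0.

Lemma E_poly (n : nat) (x : R) : E n x = sum_f_R0 (fun k => Ec n k * x ^ k) n.
Proof.
  set (a := fun k => x ^ k / INR (fact k)).
  set (b := fun k => E k 0 / INR (fact k)).
  assert (Hcoef : forall m, E m x / INR (fact m) = PS_mult a b m).
  { apply (ps_coef_unique _ _ PI PI_RGT_0). intros t Ht.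
    exists (2 * exp (x * t) / (exp t + 1)). split.
    - apply E_series; auto.
    - assert (Ha : is_pseries a t (exp (x * t))).
      { pose proof (is_exp_Reals (x * t)) as He. apply is_pseries_R in He.
        apply is_pseries_R. eapply is_series_ext_R; [|exact He]. intros k. 
        unfold a. rewrite Rpow_mult_distr. field. apply INR_fact_neq_0. }
      assert (Hb : is_pseries b t (2 * exp (0 * t) / (exp t + 1))).
      { apply is_pseries_R. apply E_series; auto. }
      assert (Hra : Rbar_lt (Rabs t) (CV_radius a)).
      { apply (cv_radius_gt a t (Rabs t + 1)); [lra|].
        pose proof (is_exp_Reals (x * (Rabs t + 1))) as He. apply is_pseries_R in He.
        eexists. eapply is_series_ext_R; [|exact He]. intros k. 
        unfold a. rewrite Rpow_mult_distr. field. apply INR_fact_neq_0. }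
      assert (Hrb : Rbar_lt (Rabs t) (CV_radius b)).
      { apply (cv_radius_gt b t ((Rabs t + PI)/2)); [lra|].
        eexists. apply (E_series 0). rewrite Rabs_pos_eq; pose proof (Rabs_pos t); lra. }
      pose proof (is_pseries_mult a b t _ _ Ha Hb Hra Hrb) as Hm.
      apply is_pseries_R in Hm. replace (2 * exp (x * t) / (exp t + 1)) with
        (exp (x * t) * (2 * exp (0 * t) / (exp t + 1))); [exact Hm|].
      rewrite Rmult_0_l, exp_0. field. pose proof (exp_pos t). lra. }
  specialize (Hcoef n). unfold PS_mult, a, b in Hcoef.
  apply (Rmult_eq_compat_r (INR (fact n))) in Hcoef.
  replace (E n x / INR (fact n) * INR (fact n)) with (E n x) in Hcoef
    by (field; apply INR_fact_neq_0).
  rewrite Hcoef, Rmult_comm, scal_sum. apply sum_eq. intros k Hk.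
  unfold Ec. field. split; apply INR_fact_neq_0.
Qed.

Lemma E_derive (n : nat) (x : R) : is_derive (E (S n)) x (INR (S n) * E n x).
Proof.
  eapply is_derive_ext.
  { intros y. symmetry. apply E_poly. }
  replace (INR (S n) * E n x) with (sum_f_R0 (fun k => Ec (S n) (S k) * INR (S k) * x ^ k) n).
  - apply poly_derive.
  - rewrite E_poly, scal_sum. apply sum_eq. intros k Hk. unfold Ec.
    replace (S n - S k)%nat with (n - k)%nat by lia.
    rewrite !fact_simpl, !mult_INR. field.
    split; [apply INR_fact_neq_0|]. split; [apply INR_fact_neq_0|]. apply not_0_INR; lia.
Qed.

Lemma E_cont (n : nat) (x : R) : continuity_pt (E n) x.
Proof.
  destruct n as [|n].
  - eapply continuity_pt_ext. { intros y. symmetry. apply E0. } apply continuity_pt_const. intros a b; auto.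
  - apply continuity_pt_filterlim. apply (ex_derive_continuous (K:=R_AbsRing) (V:=R_NormedModule) (E (S n))). eexists. apply E_derive.
Qed.
End Euler.

Definition tt (j k : nat) (y : R) : R :=
  cos ((2 * INR k + 1) * PI * y - INR j * PI / 2) / (2 * INR k + 1) ^ j.
Definition PP (j K : nat) (y : R) : R := sum_f_R0 (fun k => tt j k y) K.

Lemma pos2k1 (k : nat) : 0 < 2 * INR k + 1.
Proof. pose proof (pos_INR k). lra. Qed.

Lemma tt_derive (j k : nat) (y : R) : is_derive (tt (S j) k) y (PI * tt j k y).
Proof.
  unfold tt. pose proof (pos2k1 k).
  auto_derive; [exact I|].
    replace (match j with | 0%nat => 1 | S _ => INR j + 1 end) with (INR j + 1)
      by (destruct j; simpl; ring).
    assert (Harg : (2 * INR k + 1) * PI * y + - ((INR j + 1) * PI / 2) =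
      (((2 * INR k + 1) * PI * y - INR j * PI / 2) - PI / 2)) by field.
    rewrite Harg.
    rewrite sin_minus, sin_PI2, cos_PI2. simpl. field. split; [apply pow_nonzero|]; lra.
Qed.

Lemma PP_derive (j K : nat) (y : R) : is_derive (PP (S j) K) y (PI * PP j K y).
Proof.
  induction K.
  - unfold PP. simpl. apply tt_derive.
  - unfold PP. apply (is_derive_ext (fun y => PP (S j) K y + tt (S j) (S K) y)).
    { intros t. reflexivity. }
    replace (PI * sum_f_R0 (fun k : nat => tt j k y) (S K)) with (PI * PP j K y + PI * tt j (S K) y)
      by (unfold PP; rewrite tech5; ring).
    apply (is_derive_plus (PP (S j) K) (tt (S j) (S K))); auto. apply tt_derive.
Qed.

Lemma PP_cont (j K : nat) (y : R) : continuity_pt (PP j K) y.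
Proof.
  apply continuity_pt_filterlim.
  apply (ex_derive_continuous (K:=R_AbsRing) (V:=R_NormedModule) (PP j K)).
  unfold PP. induction K.
  - simpl. unfold tt. auto_derive; auto.
  - apply (ex_derive_ext (fun y => sum_f_R0 (fun k => tt j k y) K + tt j (S K) y)).
    { intros t; reflexivity. }
    apply (ex_derive_plus (fun y => sum_f_R0 (fun k => tt j k y) K) (tt j (S K))); auto.
    unfold tt. auto_derive; auto.
Qed.

Lemma tt_anti (j k : nat) (y : R) : tt j k (y + 1) = - tt j k y.
Proof.
  unfold tt.
  replace ((2 * INR k + 1) * PI * (y + 1) - INR j * PI / 2) with
    ((((2 * INR k + 1) * PI * y - INR j * PI / 2) + PI) + 2 * INR k * PI) by ring.
  rewrite cos_period, neg_cos. field. apply pow_nonzero. pose proof (pos2k1 k); lra.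
Qed.

Lemma PP_anti (j K : nat) (y : R) : PP j K (y + 1) = - PP j K y.
Proof.
  unfold PP. induction K; simpl; rewrite ?IHK, tt_anti; ring.
Qed.

Lemma PP_shift_nat (j K : nat) (y : R) (n : nat) :
  PP j K (y + INR n) = (-1) ^ n * PP j K y.
Proof.
  induction n.
  - simpl. rewrite Rplus_0_r. ring.
  - rewrite S_INR. replace (y + (INR n + 1)) with ((y + INR n) + 1) by ring.
    rewrite PP_anti, IHn. simpl. ring.
Qed.

Lemma PP_shift (j K : nat) (y : R) (m : Z) :
  PP j K (y + IZR m) = (-1) ^ (Z.abs_nat m) * PP j K y.
Proof.
  destruct (Z_le_gt_dec 0 m) as [Hm|Hm].
  - rewrite <- (Z2Nat.id m Hm) at 1. rewrite <- INR_IZR_INZ, PP_shift_nat.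
    rewrite Zabs2Nat.abs_nat_nonneg; auto.
  - set (n := Z.abs_nat m).
    assert (Hm' : IZR m = - INR n).
    { unfold n. rewrite INR_IZR_INZ, Zabs2Nat.id_abs, Z.abs_neq by lia.
      rewrite opp_IZR. ring. }
    rewrite Hm'.
    assert (H := PP_shift_nat j K (y - INR n) n).
    replace (y - INR n + INR n) with y in H by ring.
    replace (y + - INR n) with (y - INR n) by ring.
    assert (Hs : (-1) ^ n * (-1) ^ n = 1).
    { rewrite <- Rpow_mult_distr. replace (-1 * -1) with 1 by ring. apply pow1. }
    rewrite H, <- Rmult_assoc, Hs. ring.
Qed.

Lemma sin_lb (u v t : R) : 0 < u -> u <= 1/2 -> 1/2 <= v -> v < 1 -> u <= t <= v ->
  Rmin (sin (PI * u)) (sin (PI * v)) <= sin (PI * t).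
Proof.
  intros Hu Hu2 Hv2 Hv Ht. pose proof PI_RGT_0.
  destruct (Rle_dec t (1/2)).
  - apply Rle_trans with (sin (PI * u)); [apply Rmin_l|].
    apply sin_incr_1; nra.
  - apply Rle_trans with (sin (PI * v)); [apply Rmin_r|].
    rewrite <- (sin_PI_x (PI * v)), <- (sin_PI_x (PI * t)).
    apply sin_incr_1; nra.
Qed.

Lemma sin_m_pos (u v : R) : 0 < u -> v < 1 -> u <= v -> 0 < Rmin (sin (PI * u)) (sin (PI * v)).
Proof.
  intros. pose proof PI_RGT_0. apply Rmin_glb_lt; apply sin_gt_0; nra.
Qed.

Lemma tt0 (k : nat) (t : R) : tt 0 k t = cos ((2 * INR k + 1) * PI * t).
Proof.
  unfold tt. rewrite pow_O.
  replace ((2 * INR k + 1) * PI * t - INR 0 * PI / 2) with ((2 * INR k + 1) * PI * t) by (simpl; field).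
  field.
Qed.

Lemma P0_closed (K : nat) (t : R) :
  PP 0 K t * (2 * sin (PI * t)) = sin (2 * (INR K + 1) * PI * t).
Proof.
  induction K.
  - unfold PP. simpl. rewrite tt0. simpl.
    replace (2 * (0 + 1) * PI * t) with (2 * (PI * t)) by field.
    rewrite sin_2a. replace ((2 * 0 + 1) * PI * t) with (PI * t) by field. ring.
  - unfold PP in *. rewrite tech5, Rmult_plus_distr_r, IHK, tt0, S_INR.
    set (B := PI * t).
    replace (2 * (INR K + 1 + 1) * PI * t) with ((2 * (INR K + 1) + 1) * B + B) by (unfold B; field).
    replace (2 * (INR K + 1) * PI * t) with ((2 * (INR K + 1) + 1) * B - B) by (unfold B; field).
    replace ((2 * (INR K + 1) + 1) * PI * t) with ((2 * (INR K + 1) + 1) * B) by (unfold B; field).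
    rewrite sin_plus, sin_minus. ring.
Qed.

Lemma cos_npi (k : nat) : cos (INR k * PI) = (-1) ^ k.
Proof.
  induction k.
  - simpl. rewrite Rmult_0_l. apply cos_0.
  - rewrite S_INR, Rmult_plus_distr_r, Rmult_1_l, neg_cos, IHk. simpl. ring.
Qed.

Lemma P1_half (K : nat) : PP 1 K (1/2) = sum_f_R0 (tg_alt PI_tg) K.
Proof.
  unfold PP. apply sum_eq. intros k _. unfold tt, tg_alt, PI_tg.
  replace ((2 * INR k + 1) * PI * (1 / 2) - INR 1 * PI / 2) with (INR k * PI) by (simpl; field).
  rewrite cos_npi. rewrite plus_INR, mult_INR. simpl. field. pose proof (pos_INR k). lra.
Qed.

Lemma leibniz : Un_cv (fun N => sum_f_R0 (tg_alt PI_tg) N) (PI / 4).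
Proof.
  rewrite <- Alt_PI_eq. unfold Alt_PI. destruct exist_PI as [l Hl].
  replace (4 * l / 4) with l by field. exact Hl.
Qed.

Definition Hf (K : nat) (t : R) : R :=
  PP 1 K t + cos (2 * (INR K + 1) * PI * t) / (4 * (INR K + 1) * sin (PI * t)).

Lemma Hf_derive (K : nat) (t : R) : sin (PI * t) <> 0 ->
  is_derive (Hf K) t (- PI * cos (2 * (INR K + 1) * PI * t) * cos (PI * t) /
                      (4 * (INR K + 1) * sin (PI * t) ^ 2)).
Proof.
  intros Hs. pose proof (pos_INR K).
  assert (Hd : is_derive (fun t => cos (2 * (INR K + 1) * PI * t) / (4 * (INR K + 1) * sin (PI * t))) t
     (- (2 * (INR K + 1) * PI) * sin (2 * (INR K + 1) * PI * t) / (4 * (INR K + 1) * sin (PI * t))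
      - cos (2 * (INR K + 1) * PI * t) * (4 * (INR K + 1) * (PI * cos (PI * t))) /
        (4 * (INR K + 1) * sin (PI * t)) ^ 2)).
  { auto_derive.
    - apply Rmult_integral_contrapositive; split; auto. lra.
    - field. split; auto. lra. }
  pose proof (is_derive_plus _ _ _ _ _ (PP_derive 0 K t) Hd) as H2.
  unfold Hf. eapply is_derive_ext. { intros s. reflexivity. }
  replace (- PI * cos (2 * (INR K + 1) * PI * t) * cos (PI * t) / (4 * (INR K + 1) * sin (PI * t) ^ 2))
    with (plus (PI * PP 0 K t) (- (2 * (INR K + 1) * PI) * sin (2 * (INR K + 1) * PI * t) / (4 * (INR K + 1) * sin (PI * t))
      - cos (2 * (INR K + 1) * PI * t) * (4 * (INR K + 1) * (PI * cos (PI * t))) /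
        (4 * (INR K + 1) * sin (PI * t)) ^ 2)).
  - exact H2.
  - unfold plus; simpl. rewrite <- (P0_closed K t).
    field. split; auto. lra.
Qed.

Lemma Rabs_le_cos (x : R) : Rabs (cos x) <= 1.
Proof. apply Rabs_le. apply COS_bound. Qed.
Lemma Rabs_le_sin (x : R) : Rabs (sin x) <= 1.
Proof. apply Rabs_le. apply SIN_bound. Qed.

Lemma abs_div_le (a b A B : R) : 0 < B -> B <= b -> Rabs a <= A -> Rabs (a / b) <= A / B.
Proof.
  intros HB Hb Ha. unfold Rdiv. rewrite Rabs_mult, Rabs_Rinv by lra.
  rewrite (Rabs_pos_eq b) by lra.
  assert (0 <= A) by (pose proof (Rabs_pos a); lra).
  apply Rle_trans with (A * / b).
  - apply Rmult_le_compat_r; [left; apply Rinv_0_lt_compat; lra| lra].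
  - apply Rmult_le_compat_l; auto. apply Rinv_le_contravar; lra.
Qed.

Lemma Hf_cont (K : nat) (t : R) : sin (PI * t) <> 0 -> continuity_pt (Hf K) t.
Proof.
  intros Hs. apply continuity_pt_filterlim.
  apply (ex_derive_continuous (K:=R_AbsRing) (V:=R_NormedModule) (Hf K)).
  eexists. apply Hf_derive; auto.
Qed.

Definition mm (u v : R) := Rmin (sin (PI * u)) (sin (PI * v)).
Definition Cst (u v : R) := PI / (4 * mm u v ^ 2) + 1 / (2 * mm u v).

Lemma P1_close (u v t : R) (K : nat) : 0 < u -> u <= 1/2 -> 1/2 <= v -> v < 1 -> u <= t <= v ->
  Rabs (PP 1 K t - PP 1 K (1/2)) <= Cst u v / (INR K + 1).
Proof.
  intros Hu Hu2 Hv2 Hv Ht.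
  assert (Hm : 0 < mm u v) by (apply sin_m_pos; lra).
  assert (Hlb : forall s, u <= s <= v -> mm u v <= sin (PI * s)) by (intros; apply sin_lb; auto).
  pose proof (pos_INR K) as HK.
  set (dH := fun c => - PI * cos (2 * (INR K + 1) * PI * c) * cos (PI * c) /
                      (4 * (INR K + 1) * sin (PI * c) ^ 2)).
  destruct (MVT_gen (Hf K) (1/2) t dH) as [c [Hc Heq]].
  { intros x Hx. apply Hf_derive.
    assert (u <= x <= v).
    { split; [apply Rle_trans with (Rmin (1/2) t)|apply Rle_trans with (Rmax (1/2) t)];
      try lra; [apply Rmin_glb| apply Rmax_lub]; lra. }
    pose proof (Hlb x H). lra. }
  { intros x Hx. apply Hf_cont.
    assert (u <= x <= v).
    { split; [apply Rle_trans with (Rmin (1/2) t)|apply Rle_trans with (Rmax (1/2) t)];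
      try lra; [apply Rmin_glb| apply Rmax_lub]; lra. }
    pose proof (Hlb x H). lra. }
  assert (Hcuv : u <= c <= v).
  { split; [apply Rle_trans with (Rmin (1/2) t)|apply Rle_trans with (Rmax (1/2) t)];
      try lra; [apply Rmin_glb| apply Rmax_lub]; lra. }
  assert (HdH : Rabs (dH c) <= PI / (4 * (INR K + 1) * mm u v ^ 2)).
  { unfold dH. apply abs_div_le.
    - apply Rmult_lt_0_compat; [lra|]. apply pow_lt; auto.
    - apply Rmult_le_compat_l; [lra|]. simpl. pose proof (Hlb c Hcuv). nra.
    - rewrite !Rabs_mult, Rabs_Ropp, (Rabs_pos_eq PI) by (pose proof PI_RGT_0; lra).
      pose proof (Rabs_le_cos (2 * (INR K + 1) * PI * c)) as H1.
      pose proof (Rabs_le_cos (PI * c)) as H2. pose proof PI_RGT_0.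
      pose proof (Rabs_pos (cos (2 * (INR K + 1) * PI * c))).
      pose proof (Rabs_pos (cos (PI * c))).
      assert (Rabs (cos (2 * (INR K + 1) * PI * c)) * Rabs (cos (PI * c)) <= 1)
        by (apply Rle_trans with (1 * 1); [apply Rmult_le_compat; auto|lra]).
      rewrite Rmult_assoc. nra. }
  assert (Hg : forall s, u <= s <= v ->
     Rabs (cos (2 * (INR K + 1) * PI * s) / (4 * (INR K + 1) * sin (PI * s))) <= 1 / (4 * (INR K + 1) * mm u v)).
  { intros s Hs. apply abs_div_le.
    - apply Rmult_lt_0_compat; lra.
    - apply Rmult_le_compat_l; [lra|]. apply Hlb; auto.
    - apply Rabs_le_cos. }
  assert (E1 : PP 1 K t - PP 1 K (1/2) = (Hf K t - Hf K (1/2))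
     - cos (2 * (INR K + 1) * PI * t) / (4 * (INR K + 1) * sin (PI * t))
     + cos (2 * (INR K + 1) * PI * (1/2)) / (4 * (INR K + 1) * sin (PI * (1/2)))).
  { unfold Hf. ring. }
  rewrite E1, Heq.
  pose proof (Hg t Ht) as G1. pose proof (Hg (1/2) ltac:(lra)) as G2.
  assert (Ht2 : Rabs (t - 1/2) <= 1) by (apply Rabs_le; lra).
  eapply Rle_trans; [apply Rabs_triang|].
  eapply Rle_trans; [apply Rplus_le_compat_r; apply Rabs_triang|].
  rewrite Rabs_Ropp, Rabs_mult.
  assert (Hp : Rabs (dH c) * Rabs (t - 1/2) <= PI / (4 * (INR K + 1) * mm u v ^ 2)).
  { pose proof (Rabs_pos (dH c)). pose proof (Rabs_pos (t - 1/2)). nra. }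
  unfold Cst.
  replace ((PI / (4 * mm u v ^ 2) + 1 / (2 * mm u v)) / (INR K + 1)) with
    (PI / (4 * (INR K + 1) * mm u v ^ 2) + 1 / (4 * (INR K + 1) * mm u v) + 1 / (4 * (INR K + 1) * mm u v))
    by (field; lra).
  lra.
Qed.

Lemma cont_eps (f : R -> R) (x0 : R) : continuity_pt f x0 ->
  forall e, 0 < e -> exists d, 0 < d /\ forall x, Rabs (x - x0) < d -> Rabs (f x - f x0) < e.
Proof.
  intros Hc e He. destruct (Hc e He) as [d [Hd H]]. exists d. split; auto.
  intros x Hx. destruct (Req_dec x x0) as [->|Hne].
  - rewrite Rminus_diag, Rabs_R0. lra.
  - apply (H x). split; [split; [exact I|auto]|exact Hx].
Qed.

Lemma nat_large (c e : R) : 0 < e -> exists N : nat, forall K : nat, (N <= K)%nat -> c / (INR K + 1) < e.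
Proof.
  intros He. destruct (Rle_dec c 0) as [Hc|Hc].
  - exists 0%nat. intros K _. pose proof (pos_INR K).
    apply Rle_lt_trans with 0; auto. apply Rmult_le_0_r; auto. left; apply Rinv_0_lt_compat; lra.
  - destruct (archimed_cor1 (e / c)) as [N [HN HN0]].
    { apply Rdiv_lt_0_compat; lra. }
    exists N. intros K HK. apply le_INR in HK.
    assert (0 < INR N) by (apply lt_0_INR; lia).
    apply (Rmult_lt_compat_l c) in HN; [|lra].
    replace (c * (e / c)) with e in HN by (field; lra).
    eapply Rle_lt_trans; [|exact HN].
    unfold Rdiv. apply Rmult_le_compat_l; [lra|]. apply Rinv_le_contravar; lra.
Qed.

Lemma unif1 (u v : R) : 0 < u -> u <= 1/2 -> 1/2 <= v -> v < 1 ->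
  forall eps, 0 < eps -> exists N, forall K t, (N <= K)%nat -> u <= t <= v ->
    Rabs (PP 1 K t - PI / 4) < eps.
Proof.
  intros Hu Hu2 Hv2 Hv eps He.
  destruct (leibniz (eps/2) ltac:(lra)) as [N1 HN1].
  destruct (nat_large (Cst u v) (eps/2) ltac:(lra)) as [N2 HN2].
  exists (Nat.max N1 N2). intros K t HK Ht.
  specialize (HN1 K ltac:(lia)). specialize (HN2 K ltac:(lia)).
  unfold R_dist in HN1. rewrite <- P1_half in HN1.
  pose proof (P1_close u v t K Hu Hu2 Hv2 Hv Ht).
  replace (PP 1 K t - PI / 4) with ((PP 1 K t - PP 1 K (1/2)) + (PP 1 K (1/2) - PI/4)) by ring.
  eapply Rle_lt_trans; [apply Rabs_triang|]. lra.
Qed.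

Lemma floor_spec (y : R) : IZR (floorR y) <= y < IZR (floorR y) + 1.
Proof.
  unfold floorR. destruct (archimed y) as [H1 H2]. rewrite minus_IZR. lra.
Qed.

Lemma frac_spec (y : R) : 0 <= fracR y < 1.
Proof. unfold fracR. pose proof (floor_spec y). lra. Qed.

Lemma y_decomp (y : R) : y = fracR y + IZR (floorR y).
Proof. unfold fracR. ring. Qed.

Definition kap (j : nat) : R := PI ^ j / (4 * INR (fact (j - 1))).

Lemma PP1_0 (K : nat) : PP 1 K 0 = 0.
Proof.
  unfold PP. induction K as [|K IH].
  - simpl. unfold tt. replace ((2 * INR 0 + 1) * PI * 0 - INR 1 * PI / 2) with (- (PI/2)) by (simpl; field).
    rewrite cos_neg, cos_PI2. field. simpl; lra.
  - rewrite tech5, IH. unfold tt.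
    replace ((2 * INR (S K) + 1) * PI * 0 - INR 1 * PI / 2) with (- (PI/2)) by (simpl; field).
    rewrite cos_neg, cos_PI2. field. pose proof (pos2k1 (S K)). lra.
Qed.

Lemma lim_scal (a l : R) (u : nat -> R) : is_lim_seq u l -> is_lim_seq (fun n => a * u n) (a * l).
Proof. intros H. apply is_lim_seq_mult'; auto. apply is_lim_seq_const. Qed.

Section Core.
Variable E : nat -> R -> R.
Hypothesis HE : is_Euler_poly E.

Lemma core1 (y : R) : is_lim_seq (fun K => PP 1 K y) (kap 1 * Ebar E 0 y).
Proof.
  apply is_lim_seq_ext with (fun K => (-1) ^ Z.abs_nat (floorR y) * PP 1 K (fracR y)).
  { intros K. rewrite <- PP_shift, <- y_decomp. reflexivity. }
  unfold Ebar, kap. simpl (fact (1 - 1)). simpl (PI ^ 1).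
  destruct (Req_EM_T y (IZR (floorR y))) as [Hy|Hy].
  - assert (fracR y = 0) by (unfold fracR; lra).
    rewrite H. apply is_lim_seq_ext with (fun _ => 0).
    { intros K. rewrite PP1_0. ring. }
    replace (PI * 1 / (4 * INR 1) * 0) with 0 by ring. apply is_lim_seq_const.
  - pose proof (frac_spec y) as Hf.
    assert (Hf0 : 0 < fracR y) by (destruct Hf as [[H|H] _]; auto; unfold fracR in H; lra).
    replace (PI * 1 / (4 * INR 1) * ((-1) ^ Z.abs_nat (floorR y) * 1)) with
      ((-1) ^ Z.abs_nat (floorR y) * (PI / 4)) by (simpl; field).
    apply lim_scal.
    apply is_lim_seq_Reals. intros eps He.
    destruct (unif1 (Rmin (fracR y) (1/2)) (Rmax (fracR y) (1/2))) with (eps := eps)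
      as [N HN]; auto.
    + apply Rmin_glb_lt; lra.
    + apply Rmin_r.
    + apply Rmax_r.
    + apply Rmax_lub_lt; lra.
    + exists N. intros K HK. unfold R_dist. apply HN; [lia|]. split; [apply Rmin_l|apply Rmax_l].
Qed.
End Core.

Lemma tt_bound (j k : nat) (t : R) : (2 <= j)%nat -> Rabs (tt j k t) <= 1 / (2 * INR k + 1) ^ 2.
Proof.
  intros Hj. unfold tt. pose proof (pos2k1 k) as Hk.
  apply abs_div_le.
  - apply pow_lt; lra.
  - replace j with (2 + (j - 2))%nat by lia. rewrite pow_add.
    rewrite <- (Rmult_1_r ((2 * INR k + 1) ^ 2)) at 1. apply Rmult_le_compat_l.
    + apply pow_le; lra.
    + apply pow_R1_Rle. pose proof (pos_INR k); lra.
  - apply Rabs_le_cos.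
Qed.

Lemma cauchy (j K d : nat) (t : R) : (2 <= j)%nat ->
  Rabs (PP j (K + d) t - PP j K t) <= 1 / (4 * (INR K + 1)) - 1 / (4 * (INR (K + d) + 1)).
Proof.
  intros Hj. pose proof (pos_INR K). induction d.
  - rewrite Nat.add_0_r, Rminus_diag, Rabs_R0. lra.
  - rewrite Nat.add_succ_r. unfold PP in *. rewrite tech5.
    replace (sum_f_R0 (fun k => tt j k t) (K + d) + tt j (S (K + d)) t - sum_f_R0 (fun k => tt j k t) K)
      with ((sum_f_R0 (fun k => tt j k t) (K + d) - sum_f_R0 (fun k => tt j k t) K) + tt j (S (K + d)) t) by ring.
    eapply Rle_trans; [apply Rabs_triang|].
    pose proof (tt_bound j (S (K + d)) t Hj) as Hb.
    rewrite S_INR in *. set (k := INR (K + d)) in *.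
    assert (0 <= k) by (unfold k; apply pos_INR).
    assert (1 / (2 * (k + 1) + 1) ^ 2 <= 1 / (4 * (k + 1)) - 1 / (4 * (k + 1 + 1))).
    { replace (1 / (4 * (k + 1)) - 1 / (4 * (k + 1 + 1))) with (1 / (4 * (k + 1) * (k + 2))) by (field; lra).
      apply Rmult_le_compat_l; [lra|]. apply Rinv_le_contravar; [nra|]. simpl. nra. }
    lra.
Qed.

Lemma cauchy' (j K K' : nat) (t : R) : (2 <= j)%nat -> (K <= K')%nat ->
  Rabs (PP j K' t - PP j K t) <= 1 / (4 * (INR K + 1)).
Proof.
  intros Hj HK. replace K' with (K + (K' - K))%nat by lia.
  eapply Rle_trans; [apply cauchy; auto|].
  assert (0 < 4 * (INR (K + (K' - K)) + 1)) by (pose proof (pos_INR (K + (K' - K))); lra).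
  assert (0 < 1 / (4 * (INR (K + (K' - K)) + 1))) by (apply Rdiv_lt_0_compat; lra). lra.
Qed.

Section Step.
Variable E : nat -> R -> R.
Hypothesis HE : is_Euler_poly E.

Definition Aj (j : nat) (y : R) := kap j * E (j - 1)%nat y.

Lemma Aj_derive (n : nat) (y : R) : is_derive (Aj (S (S n))) y (PI * Aj (S n) y).
Proof.
  unfold Aj. simpl (S (S n) - 1)%nat. simpl (S n - 1)%nat. rewrite Nat.sub_0_r.
  replace (PI * (kap (S n) * E n y)) with (kap (S (S n)) * (INR (S n) * E n y)).
  - apply (is_derive_scal (E (S n))). apply E_derive; auto.
  - unfold kap. simpl (S (S n) - 1)%nat. simpl (S n - 1)%nat. rewrite Nat.sub_0_r.
    rewrite fact_simpl, mult_INR. simpl (PI ^ S (S n)). simpl (PI ^ S n).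
    field. split; [apply INR_fact_neq_0|]. apply not_0_INR; lia.
Qed.

Lemma Aj_cont (j : nat) (y : R) : continuity_pt (Aj j) y.
Proof.
  unfold Aj. apply continuity_pt_scal. apply E_cont; auto.
Qed.

Lemma Aj_anti (n : nat) : Aj (S (S n)) 1 = - Aj (S (S n)) 0.
Proof.
  unfold Aj. simpl (S (S n) - 1)%nat. pose proof (E01 E HE (S n) ltac:(lia)). nra.
Qed.

Definition unif (j : nat) := forall u v, 0 < u -> u <= 1/2 -> 1/2 <= v -> v < 1 ->
  forall eps, 0 < eps -> exists N, forall K t, (N <= K)%nat -> u <= t <= v ->
    Rabs (PP j K t - Aj j t) < eps.

Definition full (j : nat) := forall eps, 0 < eps -> exists N, forall K t, (N <= K)%nat -> 0 <= t <= 1 ->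
    Rabs (PP j K t - Aj j t) < eps.

Lemma unif_1 : unif 1.
Proof.
  intros u v Hu Hu2 Hv2 Hv eps He. destruct (unif1 u v Hu Hu2 Hv2 Hv eps He) as [N HN].
  exists N. intros K t HK Ht. unfold Aj, kap. simpl (1 - 1)%nat. rewrite E0; auto.
  replace (PI ^ 1 / (4 * INR (fact 0)) * 1) with (PI / 4) by (simpl; field). auto.
Qed.

Lemma full_unif (j : nat) : full j -> unif j.
Proof.
  intros H u v Hu Hu2 Hv2 Hv eps He. destruct (H eps He) as [N HN]. exists N.
  intros K t HK Ht. apply HN; auto. lra.
Qed.

Definition DD (j K : nat) (t : R) := PP j K t - Aj j t.

Lemma DD_derive (n K : nat) (t : R) :
  is_derive (DD (S (S n)) K) t (PI * (PP (S n) K t - Aj (S n) t)).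
Proof.
  unfold DD. replace (PI * (PP (S n) K t - Aj (S n) t)) with (minus (PI * PP (S n) K t) (PI * Aj (S n) t))
    by (unfold minus, plus, opp; simpl; ring).
  apply (is_derive_minus (PP (S (S n)) K) (Aj (S (S n)))).
  - apply PP_derive.
  - apply Aj_derive.
Qed.

Lemma DD_cont (j K : nat) (t : R) : continuity_pt (DD j K) t.
Proof. unfold DD. apply continuity_pt_minus; [apply PP_cont|apply Aj_cont]. Qed.

Lemma F2 (n : nat) : unif (S n) -> forall u v, 0 < u -> u <= 1/2 -> 1/2 <= v -> v < 1 ->
  forall eps, 0 < eps -> exists N, forall K t, (N <= K)%nat -> u <= t <= v ->
    Rabs (DD (S (S n)) K t - DD (S (S n)) K (1/2)) < eps.
Proof.
  intros IH u v Hu Hu2 Hv2 Hv eps He. pose proof PI_RGT_0.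
  destruct (IH u v Hu Hu2 Hv2 Hv (eps / PI)) as [N HN].
  { apply Rdiv_lt_0_compat; lra. }
  exists N. intros K t HK Ht.
  destruct (MVT_gen (DD (S (S n)) K) (1/2) t (fun c => PI * (PP (S n) K c - Aj (S n) c))) as [c [Hc Heq]].
  { intros x _. apply DD_derive. }
  { intros x _. apply DD_cont. }
  assert (Hcuv : u <= c <= v).
  { split; [apply Rle_trans with (Rmin (1/2) t)|apply Rle_trans with (Rmax (1/2) t)];
      try lra; [apply Rmin_glb| apply Rmax_lub]; lra. }
  rewrite Heq. rewrite Rabs_mult, Rabs_mult, (Rabs_pos_eq PI) by lra.
  specialize (HN K c HK Hcuv).
  assert (Ht2 : Rabs (t - 1/2) <= 1) by (apply Rabs_le; lra).
  pose proof (Rabs_pos (t - 1/2)). pose proof (Rabs_pos (PP (S n) K c - Aj (S n) c)).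
  apply Rle_lt_trans with (PI * Rabs (PP (S n) K c - Aj (S n) c)).
  - rewrite <- (Rmult_1_r (PI * Rabs (PP (S n) K c - Aj (S n) c))) at 2.
    apply Rmult_le_compat_l; nra.
  - apply (Rmult_lt_compat_l PI) in HN; auto. replace (PI * (eps / PI)) with eps in HN by (field; lra).
    exact HN.
Qed.

Lemma abs_lt (x a : R) : Rabs x < a -> - a < x < a.
Proof. intros H. destruct (Rabs_def2 x a H). lra. Qed.

Lemma full_step (n : nat) : unif (S n) -> full (S (S n)).
Proof.
  intros IH eps Heps. set (j := S (S n)). set (e := eps / 12).
  assert (He : 0 < e) by (unfold e; lra).
  assert (Hee : eps = 12 * e) by (unfold e; field).
  destruct (nat_large 1 (4 * e) ltac:(lra)) as [K0 HK0].
  specialize (HK0 K0 (le_n _)).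
  assert (HC : forall K t, (K0 <= K)%nat -> Rabs (DD j K t - DD j K0 t) < e).
  { intros K t HK. unfold DD.
    replace (PP j K t - Aj j t - (PP j K0 t - Aj j t)) with (PP j K t - PP j K0 t) by ring.
    eapply Rle_lt_trans; [apply cauchy'; [unfold j; lia|exact HK]|].
    replace (1 / (4 * (INR K0 + 1))) with ((1 / (INR K0 + 1)) / 4) by (field; pose proof (pos_INR K0); lra).
    lra. }
  destruct (cont_eps _ _ (DD_cont j K0 0) e He) as [d0 [Hd0 H0]].
  destruct (cont_eps _ _ (DD_cont j K0 1) e He) as [d1 [Hd1 H1]].
  set (u := Rmin (d0 / 2) (1/2)). set (v := Rmax (1 - d1 / 2) (1/2)).
  assert (Hu : 0 < u) by (apply Rmin_glb_lt; lra).
  assert (Hu2 : u <= 1/2) by apply Rmin_r.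
  assert (Hud : u <= d0 / 2) by apply Rmin_l.
  assert (Hv2 : 1/2 <= v) by apply Rmax_r.
  assert (Hvd : 1 - d1 / 2 <= v) by apply Rmax_l.
  assert (Hv : v < 1) by (apply Rmax_lub_lt; lra).
  destruct (F2 n IH u v Hu Hu2 Hv2 Hv e He) as [N1 HN1].
  change (S (S n)) with j in HN1.
  exists (Nat.max K0 N1). intros K t HK Ht.
  assert (HK0' : (K0 <= K)%nat) by lia.
  assert (HN1' : (N1 <= K)%nat) by lia.
  set (c := DD j K (1/2)).
  pose proof (abs_lt _ _ (HC K 0 HK0')) as A1.
  pose proof (abs_lt _ _ (HC K 1 HK0')) as A2.
  pose proof (abs_lt _ _ (HC K u HK0')) as A3.
  pose proof (abs_lt _ _ (HC K v HK0')) as A4.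
  pose proof (abs_lt _ _ (HC K t HK0')) as A5.
  pose proof (abs_lt _ _ (H0 u ltac:(apply Rabs_def1; lra))) as B1.
  pose proof (abs_lt _ _ (H1 v ltac:(apply Rabs_def1; lra))) as B2.
  pose proof (abs_lt _ _ (HN1 K u HN1' ltac:(lra))) as C1.
  pose proof (abs_lt _ _ (HN1 K v HN1' ltac:(lra))) as C2.
  assert (Hanti : DD j K 1 = - DD j K 0).
  { unfold DD, j. rewrite Aj_anti. replace 1 with (0 + 1) at 1 by ring. rewrite PP_anti. ring. }
  fold c in C1, C2.
  change (Rabs (DD j K t) < eps).
  destruct (Rlt_le_dec t u) as [Htu|Htu].
  - pose proof (abs_lt _ _ (H0 t ltac:(apply Rabs_def1; lra))) as B3.
    apply Rabs_def1; lra.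
  - destruct (Rle_lt_dec t v) as [Htv|Htv].
    + pose proof (abs_lt _ _ (HN1 K t HN1' ltac:(lra))) as C3. fold c in C3.
      apply Rabs_def1; lra.
    + pose proof (abs_lt _ _ (H1 t ltac:(apply Rabs_def1; lra))) as B3.
      apply Rabs_def1; lra.
Qed.

End Step.

Section Core2.
Variable E : nat -> R -> R.
Hypothesis HE : is_Euler_poly E.

Lemma unif_all (n : nat) : unif E (S n).
Proof.
  induction n.
  - apply unif_1; auto.
  - apply full_unif. apply full_step; auto.
Qed.

Lemma core (j : nat) (y : R) : (1 <= j)%nat ->
  is_lim_seq (fun K => PP j K y) (kap j * Ebar E (j - 1) y).
Proof.
  intros Hj. destruct j as [|[|n]]; [lia| apply core1; auto|].
  apply is_lim_seq_ext with (fun K => (-1) ^ Z.abs_nat (floorR y) * PP (S (S n)) K (fracR y)).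
  { intros K. rewrite <- PP_shift, <- y_decomp. reflexivity. }
  simpl (S (S n) - 1)%nat. unfold Ebar.
  replace (kap (S (S n)) * ((-1) ^ Z.abs_nat (floorR y) * E (S n) (fracR y))) with
    ((-1) ^ Z.abs_nat (floorR y) * Aj E (S (S n)) (fracR y)) by (unfold Aj; simpl (S (S n) - 1)%nat; ring).
  apply lim_scal. apply is_lim_seq_Reals. intros eps He.
  destruct (full_step E HE n (unif_all n) eps He) as [N HN].
  exists N. intros K HK. unfold R_dist. apply HN; [lia|]. pose proof (frac_spec y). lra.
Qed.
End Core2.

Definition sc (r a : R) : C := (r * cos a, r * sin a).

Lemma Ceq (a b : C) : fst a = fst b -> snd a = snd b -> a = b.
Proof. destruct a, b; simpl; intros; subst; auto. Qed.

Lemma sc_mult (r1 a1 r2 a2 : R) : Cmult (sc r1 a1) (sc r2 a2) = sc (r1 * r2) (a1 + a2).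
Proof. unfold sc. apply Ceq; simpl; rewrite ?cos_plus, ?sin_plus; ring. Qed.

Lemma cis_sc (a : R) : cis a = sc 1 a.
Proof. unfold cis, sc. apply Ceq; simpl; ring. Qed.

Lemma RtoC_sc (r : R) : RtoC r = sc r 0.
Proof. unfold sc, RtoC. rewrite cos_0, sin_0. apply Ceq; simpl; ring. Qed.

Lemma sc_plus_same (r s a : R) : Cplus (sc r a) (sc s a) = sc (r + s) a.
Proof. unfold sc. apply Ceq; simpl; ring. Qed.

Lemma pow_n_RtoC (x : R) (j : nat) : pow_n (RtoC x) j = RtoC (x ^ j).
Proof.
  induction j.
  - reflexivity.
  - simpl pow_n. rewrite IHj. unfold RtoC. apply Ceq; simpl; ring.
Qed.

Lemma Cdiv_RtoC (z : C) (r : R) : r <> 0 -> Cdiv z (RtoC r) = (fst z / r, snd z / r).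
Proof.
  intros Hr. destruct z. unfold Cdiv, Cmult, Cinv, RtoC. simpl. apply Ceq; simpl; field; auto.
Qed.

Lemma Cdiv_cis_pow (a rho : R) (j : nat) : rho <> 0 ->
  Cdiv (cis a) (pow_n (RtoC rho) j) = sc (/ rho ^ j) a.
Proof.
  intros H. rewrite pow_n_RtoC, Cdiv_RtoC by (apply pow_nonzero; auto).
  unfold sc, cis. apply Ceq; simpl; field; apply pow_nonzero; auto.
Qed.

Lemma pow_n_2piI (j : nat) : pow_n (Cmult (RtoC (2 * PI)) Ci) j = sc ((2 * PI) ^ j) (INR j * PI / 2).
Proof.
  induction j.
  - unfold sc. simpl pow. simpl INR. replace (0 * PI / 2) with 0 by field. rewrite cos_0, sin_0.
    apply Ceq; simpl; ring.
  - simpl pow_n. rewrite IHj. rewrite S_INR.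
    replace (Cmult (RtoC (2 * PI)) Ci) with (sc (2 * PI) (PI / 2)).
    + transitivity (Cmult (sc (2*PI) (PI/2)) (sc ((2*PI)^j) (INR j * PI/2))); [reflexivity|].
      rewrite sc_mult. apply f_equal2; [simpl; ring|field].
    + unfold sc, RtoC, Ci. rewrite cos_PI2, sin_PI2. apply Ceq; simpl; ring.
Qed.

Lemma cos_plus_npi (x : R) (j : nat) : cos (x + INR j * PI) = (-1) ^ j * cos x.
Proof.
  induction j.
  - simpl. rewrite Rmult_0_l, Rplus_0_r. ring.
  - rewrite S_INR. replace (x + (INR j + 1) * PI) with ((x + INR j * PI) + PI) by ring.
    rewrite neg_cos, IHj. simpl. ring.
Qed.

Lemma sin_plus_npi (x : R) (j : nat) : sin (x + INR j * PI) = (-1) ^ j * sin x.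
Proof.
  induction j.
  - simpl. rewrite Rmult_0_l, Rplus_0_r. ring.
  - rewrite S_INR. replace (x + (INR j + 1) * PI) with ((x + INR j * PI) + PI) by ring.
    rewrite neg_sin, IHj. simpl. ring.
Qed.

Definition vv (j : nat) (y : R) (n : Z) : C :=
  Cdiv (cis (2 * PI * IZR n * y)) (pow_n (RtoC (IZR n - 1 / 2)) j).

Lemma half_ne0 (n : Z) : IZR n - 1/2 <> 0.
Proof.
  intros H. assert (IZR (2 * n) = 1) by (rewrite mult_IZR; lra).
  apply eq_IZR in H0. lia.
Qed.

Definition Kj (j : nat) (y : R) : C := sc (2 ^ (S j)) (PI * y + INR j * PI / 2).

Lemma pair_id (j k : nat) (y : R) :
  Cplus (vv j y (Z.of_nat k + 1)) (vv j y (- Z.of_nat k)) = Cmult (Kj j y) (RtoC (tt j k y)).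
Proof.
  unfold vv. rewrite !Cdiv_cis_pow by apply half_ne0.
  rewrite plus_IZR, opp_IZR, <- INR_IZR_INZ.
  set (m := INR k + 1/2).
  assert (Hm : 0 < m) by (unfold m; pose proof (pos_INR k); lra).
  replace (INR k + 1 - 1/2) with m by (unfold m; field).
  replace (- INR k - 1/2) with ((-1) * m) by (unfold m; field).
  rewrite RtoC_sc. unfold Kj. rewrite sc_mult, Rplus_0_r.
  unfold tt. replace (2 * INR k + 1) with (2 * m) by (unfold m; field).
  set (A := PI * y + INR j * PI / 2).
  set (B := 2 * m * PI * y - INR j * PI / 2).
  assert (E1 : 2 * PI * (INR k + 1) * y = A + B) by (unfold A, B, m; field).
  assert (E2 : 2 * PI * (- INR k) * y + INR j * PI = A - B) by (unfold A, B, m; field).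
  assert (Hpj : (-1) ^ j * (-1) ^ j = 1).
  { rewrite <- Rpow_mult_distr. replace (-1 * -1) with 1 by ring. apply pow1. }
  assert (C2 : cos (2 * PI * (- INR k) * y) = (-1) ^ j * cos (A - B)).
  { rewrite <- E2, cos_plus_npi, <- Rmult_assoc, Hpj. ring. }
  assert (S2 : sin (2 * PI * (- INR k) * y) = (-1) ^ j * sin (A - B)).
  { rewrite <- E2, sin_plus_npi, <- Rmult_assoc, Hpj. ring. }
  unfold sc. apply Ceq; simpl fst; simpl snd.
  - rewrite E1, C2, cos_plus, cos_minus, !Rpow_mult_distr.
    simpl (2 ^ S j). field. split; [apply pow_nonzero; lra|]. split; apply pow_nonzero; lra.
  - rewrite E1, S2, sin_plus, sin_minus, !Rpow_mult_distr.
    simpl (2 ^ S j). field. split; [apply pow_nonzero; lra|]. split; apply pow_nonzero; lra.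
Qed.

Definition Clim (u : nat -> C) (l : C) :=
  is_lim_seq (fun n => fst (u n)) (fst l) /\ is_lim_seq (fun n => snd (u n)) (snd l).

Lemma Clim_ext (u v : nat -> C) (l : C) : (forall n, u n = v n) -> Clim u l -> Clim v l.
Proof.
  intros H [H1 H2]. split; eapply is_lim_seq_ext; try eassumption; intros n; simpl; rewrite H; auto.
Qed.

Lemma Clim_plus (u v : nat -> C) (a b : C) : Clim u a -> Clim v b ->
  Clim (fun n => Cplus (u n) (v n)) (Cplus a b).
Proof.
  intros [H1 H2] [H3 H4]. split; simpl; apply is_lim_seq_plus'; auto.
Qed.

Lemma Clim_mult_l (k : C) (u : nat -> C) (a : C) : Clim u a -> Clim (fun n => Cmult k (u n)) (Cmult k a).
Proof.
  intros [H1 H2]. split; simpl.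
  - apply is_lim_seq_minus'; apply lim_scal; auto.
  - apply is_lim_seq_plus'; apply lim_scal; auto.
Qed.

Lemma Clim_RtoC (u : nat -> R) (l : R) : is_lim_seq u l -> Clim (fun n => RtoC (u n)) (RtoC l).
Proof. intros H. split; simpl; auto. apply is_lim_seq_const. Qed.

Lemma Clim_sum (U : nat -> nat -> C) (L : nat -> C) (m : nat) :
  (forall l, Clim (U l) (L l)) -> Clim (fun n => sum_n (fun l => U l n) m) (sum_n L m).
Proof.
  intros H. induction m.
  - rewrite sum_O. eapply Clim_ext; [|apply (H 0%nat)]. intros n. rewrite sum_O. auto.
  - rewrite sum_Sn. eapply Clim_ext; [|apply (Clim_plus _ _ _ _ IHm (H (S m)))].
    intros n. rewrite sum_Sn. reflexivity.
Qed.

Lemma Clim_S (u : nat -> C) (l : C) : Clim (fun n => u (S n)) l -> Clim u l.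
Proof. intros [H1 H2]. split; apply is_lim_seq_incr_1; auto. Qed.

Lemma Clim_mul (u : nat -> C) (l : C) (B : nat) : (1 <= B)%nat -> Clim u l -> Clim (fun N => u (B * N)%nat) l.
Proof.
  intros HB [H1 H2].
  assert (Hphi : filterlim (fun N => (B * N)%nat) eventually eventually).
  { intros P [N HN]. exists N. intros n Hn. apply HN. nia. }
  split; apply (is_lim_seq_subseq (fun n => _ (u n))); auto.
Qed.

Lemma Clim_filterlim (u : nat -> C) (l : C) : Clim u l -> filterlim u eventually (locally l).
Proof.
  intros [H1 H2]. destruct l as [l1 l2].
  apply filterlim_locally. intros eps.
  apply is_lim_seq_spec in H1. apply is_lim_seq_spec in H2.
  destruct (H1 eps) as [N1 HN1]. destruct (H2 eps) as [N2 HN2].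
  exists (Nat.max N1 N2). intros n Hn.
  specialize (HN1 n ltac:(lia)). specialize (HN2 n ltac:(lia)).
  split; simpl in *; auto.
Qed.

Lemma exists_nat_gt (x : R) : exists N : nat, x < INR N.
Proof.
  destruct (archimed x) as [H1 _]. exists (Z.to_nat (up x)).
  destruct (Z_le_gt_dec 0 (up x)).
  - rewrite INR_IZR_INZ, Z2Nat.id; auto.
  - assert (Hu : (up x < 0)%Z) by lia. apply IZR_lt in Hu.
    pose proof (pos_INR (Z.to_nat (up x))). lra.
Qed.

Lemma vv_small (j : nat) (y : R) (n : Z) (eps : R) : (1 <= j)%nat -> 0 < eps ->
  1 <= Rabs (IZR n - 1/2) -> 1 / eps < Rabs (IZR n - 1/2) ->
  Rabs (fst (vv j y n)) < eps /\ Rabs (snd (vv j y n)) < eps.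
Proof.
  intros Hj He H1 H2. unfold vv. rewrite Cdiv_cis_pow by apply half_ne0.
  set (r := IZR n - 1/2) in *.
  assert (Hr : 0 < Rabs r) by lra.
  assert (Hb : Rabs (/ r ^ j) <= / Rabs r).
  { rewrite Rabs_inv, <- RPow_abs. apply Rinv_le_contravar; auto.
    replace j with (S (j - 1)) by lia. simpl. rewrite <- (Rmult_1_r (Rabs r)) at 1.
    apply Rmult_le_compat_l; [lra|]. apply pow_R1_Rle; lra. }
  assert (Hb2 : / Rabs r < eps).
  { apply (Rmult_lt_compat_l eps) in H2; auto.
    replace (eps * (1 / eps)) with 1 in H2 by (field; lra).
    apply (Rmult_lt_reg_l (Rabs r)); auto. rewrite Rinv_r by lra. lra. }
  assert (Hz : forall z, Rabs z <= 1 -> Rabs (/ r ^ j) * Rabs z < eps).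
  { intros z Hz. apply Rle_lt_trans with (Rabs (/ r ^ j) * 1).
    - apply Rmult_le_compat_l; auto. apply Rabs_pos.
    - lra. }
  unfold sc; simpl. rewrite !Rabs_mult.
  split; apply Hz; [apply Rabs_le_cos|apply Rabs_le_sin].
Qed.

Lemma vv_decay (j : nat) (y : R) (c : Z) (sg : bool) : (1 <= j)%nat ->
  Clim (fun M => vv j y (if sg then c + Z.of_nat M else c - Z.of_nat M)%Z) (RtoC 0).
Proof.
  intros Hj. split; apply is_lim_seq_spec; intros eps; simpl; pose proof (cond_pos eps) as He.
  all: destruct (exists_nat_gt (Rabs (IZR c) + 2 + 1 / eps)) as [N HN];
    exists N; intros M HM; rewrite Rminus_0_r;
    apply le_INR in HM;
    assert (Hz : Rabs (IZR (if sg then c + Z.of_nat M else c - Z.of_nat M)%Z - 1/2) > Rabs (IZR c) + 1 + 1 / eps - Rabs (IZR c))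
      by (destruct sg; rewrite ?plus_IZR, ?minus_IZR, <- ?INR_IZR_INZ;
          match goal with |- Rabs ?X > _ => pose proof (Rle_abs X); pose proof (Rabs_maj2 X) end;
          pose proof (Rle_abs (IZR c)); pose proof (Rabs_maj2 (IZR c)); lra);
    assert (0 < 1 / eps) by (apply Rdiv_lt_0_compat; lra).
  - apply (vv_small j y _ eps Hj He); lra.
  - apply (vv_small j y _ eps Hj He); lra.
Qed.

Lemma sum_n_shift {G : AbelianMonoid} (a : nat -> G) (n : nat) :
  sum_n a (S n) = plus (a 0%nat) (sum_n (fun k => a (S k)) n).
Proof.
  induction n.
  - rewrite sum_Sn, !sum_O. reflexivity.
  - rewrite sum_Sn, IHn, sum_Sn. symmetry. apply plus_assoc.
Qed.

Lemma sym_S (g : Z -> C) (M : nat) :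
  sym_partial g (S M) = Cplus (g (- Z.of_nat (S M))%Z) (Cplus (sym_partial g M) (g (Z.of_nat (S M)))).
Proof.
  unfold sym_partial. replace (2 * S M)%nat with (S (S (2 * M))) by lia.
  rewrite sum_n_shift, sum_Sn.
  replace (Z.of_nat 0 - Z.of_nat (S M))%Z with (- Z.of_nat (S M))%Z by lia.
  apply (f_equal2 Cplus); [reflexivity|]. apply (f_equal2 Cplus).
  - apply sum_n_ext. intros k. apply f_equal. lia.
  - f_equal. lia.
Qed.



Lemma Clim_opp (v : nat -> C) (b : C) : Clim v b -> Clim (fun n => Copp (v n)) (Copp b).
Proof.
  intros H. replace (Copp b) with (Cmult (RtoC (-1)) b) by (apply Ceq; simpl; ring).
  eapply Clim_ext; [|apply (Clim_mult_l (RtoC (-1))); exact H].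
  intros n. apply Ceq; simpl; ring.
Qed.

Lemma sym_pair (j M : nat) (y : R) :
  sym_partial (vv j y) (S M) = Cplus (vv j y (- Z.of_nat (S M))%Z) (Cmult (Kj j y) (RtoC (PP j M y))).
Proof.
  induction M.
  - rewrite sym_S. unfold sym_partial. simpl (2 * 0)%nat. rewrite sum_O.
    unfold PP. simpl sum_f_R0. rewrite <- pair_id. f_equal.
    simpl (Z.of_nat 0 - Z.of_nat 0)%Z. simpl (Z.of_nat 0 + 1)%Z. simpl (- Z.of_nat 0)%Z.
    simpl (Z.of_nat 1). apply Ceq; simpl; ring.
  - rewrite sym_S, IHM. unfold PP. rewrite tech5.
    replace (RtoC (sum_f_R0 (fun k => tt j k y) M + tt j (S M) y)) with
      (Cplus (RtoC (sum_f_R0 (fun k => tt j k y) M)) (RtoC (tt j (S M) y))) by (apply Ceq; simpl; ring).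
    rewrite Cmult_plus_distr_l, <- pair_id.
    replace (Z.of_nat (S M) + 1)%Z with (Z.of_nat (S (S M))) by lia.
    replace (- Z.of_nat (S M))%Z with (- Z.of_nat (S M))%Z by reflexivity.
    unfold PP. ring.
Qed.

Section Base.
Variable E : nat -> R -> R.
Hypothesis HE : is_Euler_poly E.

Lemma base (j : nat) (y : R) : (1 <= j)%nat ->
  Clim (sym_partial (vv j y)) (Cmult (Kj j y) (RtoC (kap j * Ebar E (j - 1) y))).
Proof.
  intros Hj. apply Clim_S.
  eapply Clim_ext. { intros M. symmetry. apply sym_pair. }
  replace (Cmult (Kj j y) (RtoC (kap j * Ebar E (j - 1) y))) with
    (Cplus (RtoC 0) (Cmult (Kj j y) (RtoC (kap j * Ebar E (j - 1) y)))) by (apply Ceq; simpl; ring).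
  apply Clim_plus.
  - eapply Clim_ext; [|apply (vv_decay j y (-1)%Z false Hj)].
    intros M. change (vv j y (-1 - Z.of_nat M)%Z = vv j y (- Z.of_nat (S M))%Z). f_equal. lia.
  - apply Clim_mult_l. apply Clim_RtoC. apply core; auto.
Qed.
End Base.

Definition Win (g : Z -> C) (c : Z) (M : nat) : C :=
  sum_n (fun k => g (c + (Z.of_nat k - Z.of_nat M))%Z) (2 * M).

Lemma Win_succ (g : Z -> C) (c : Z) (M : nat) :
  Cplus (Win g c M) (g (c + Z.of_nat M + 1)%Z) = Cplus (g (c - Z.of_nat M)%Z) (Win g (c + 1) M).
Proof.
  unfold Win.
  transitivity (sum_n (fun k => g (c + (Z.of_nat k - Z.of_nat M))%Z) (S (2 * M))).
  - rewrite sum_Sn. apply (f_equal2 Cplus); [reflexivity|]. apply f_equal. lia.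
  - rewrite sum_n_shift. apply (f_equal2 Cplus).
    + apply f_equal. lia.
    + apply sum_n_ext. intros k. apply f_equal. lia.
Qed.

Lemma Win_lim (g : Z -> C) (L : C) :
  (forall (c : Z) (sg : bool), Clim (fun M => g (if sg then c + Z.of_nat M else c - Z.of_nat M)%Z) (RtoC 0)) ->
  Clim (sym_partial g) L -> forall c, Clim (Win g c) L.
Proof.
  intros Hd Hs.
  assert (H0 : Clim (Win g 0) L).
  { eapply Clim_ext; [|exact Hs]. intros M. unfold sym_partial, Win. apply sum_n_ext. intros k. f_equal. }
  assert (Hup : forall c, Clim (Win g c) L -> Clim (Win g (c + 1)) L).
  { intros c H.
    eapply Clim_ext.
    { intros M. symmetry.
      assert (E1 := Win_succ g c M).
      transitivity (Cplus (Cplus (Win g c M) (g (c + 1 + Z.of_nat M)%Z)) (Copp (g (c - Z.of_nat M)%Z))).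
      - replace (c + 1 + Z.of_nat M)%Z with (c + Z.of_nat M + 1)%Z by lia. rewrite E1. ring.
      - reflexivity. }
    replace L with (Cplus (Cplus L (RtoC 0)) (Copp (RtoC 0))) by (apply Ceq; simpl; ring).
    apply Clim_plus; [apply Clim_plus|apply Clim_opp]; auto.
    - apply (Hd (c + 1)%Z true).
    - apply (Hd c false). }
  assert (Hdown : forall c, Clim (Win g c) L -> Clim (Win g (c - 1)) L).
  { intros c H.
    eapply Clim_ext.
    { intros M. symmetry.
      assert (E1 := Win_succ g (c - 1) M).
      replace (c - 1 + 1)%Z with c in E1 by lia.
      transitivity (Cplus (Cplus (Win g c M) (g (c - 1 - Z.of_nat M)%Z)) (Copp (g (c + Z.of_nat M)%Z))).
      - replace (c + Z.of_nat M)%Z with (c - 1 + Z.of_nat M + 1)%Z by lia.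
        assert (Win g (c - 1) M = Cplus (Cplus (g (c - 1 - Z.of_nat M)%Z) (Win g c M)) (Copp (g (c - 1 + Z.of_nat M + 1)%Z))).
        { rewrite <- E1. ring. }
        rewrite H1. ring.
      - reflexivity. }
    replace L with (Cplus (Cplus L (RtoC 0)) (Copp (RtoC 0))) by (apply Ceq; simpl; ring).
    apply Clim_plus; [apply Clim_plus|apply Clim_opp]; auto.
    - apply (Hd (c - 1)%Z false).
    - apply (Hd c true). }
  intros c. destruct (Z_le_gt_dec 0 c).
  - rewrite <- (Z2Nat.id c) by lia. induction (Z.to_nat c).
    + exact H0.
    + rewrite Nat2Z.inj_succ. unfold Z.succ. apply Hup. exact IHn.
  - replace c with (- Z.of_nat (Z.to_nat (- c)))%Z by lia. induction (Z.to_nat (- c)).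
    + exact H0.
    + rewrite Nat2Z.inj_succ. unfold Z.succ. replace (- (Z.of_nat n + 1))%Z with (- Z.of_nat n - 1)%Z by lia.
      apply Hdown. exact IHn.
Qed.

Lemma cos_sin_2piZ (z : Z) : cos (2 * PI * IZR z) = 1 /\ sin (2 * PI * IZR z) = 0.
Proof.
  assert (Hn : forall n : nat, cos (2 * PI * INR n) = 1 /\ sin (2 * PI * INR n) = 0).
  { intros n. replace (2 * PI * INR n) with (0 + 2 * INR n * PI) by ring.
    rewrite cos_period, sin_period, cos_0, sin_0. auto. }
  destruct (Z_le_gt_dec 0 z).
  - rewrite <- (Z2Nat.id z) by lia. rewrite <- INR_IZR_INZ. apply Hn.
  - replace z with (- Z.of_nat (Z.to_nat (- z)))%Z by lia. rewrite opp_IZR, <- INR_IZR_INZ.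
    replace (2 * PI * - INR (Z.to_nat (- z))) with (- (2 * PI * INR (Z.to_nat (- z)))) by ring.
    rewrite cos_neg, sin_neg. destruct (Hn (Z.to_nat (- z))) as [H1 H2]. rewrite H1, H2. split; ring.
Qed.

Lemma cis_2piZ (z : Z) : cis (2 * PI * IZR z) = RtoC 1.
Proof. destruct (cos_sin_2piZ z) as [H1 H2]. unfold cis, RtoC. rewrite H1, H2. reflexivity. Qed.

Lemma pow_n_cis (a : R) (l : nat) : pow_n (cis a) l = cis (INR l * a).
Proof.
  induction l.
  - simpl. rewrite Rmult_0_l. unfold cis. rewrite cos_0, sin_0. reflexivity.
  - transitivity (Cmult (cis a) (pow_n (cis a) l)); [reflexivity|].
    rewrite IHl, !cis_sc, sc_mult, S_INR. f_equal; ring.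
Qed.

Lemma geom_C (w : C) (n : nat) :
  Cmult (Cminus w (RtoC 1)) (sum_n (fun l => pow_n w l) n) = Cminus (pow_n w (S n)) (RtoC 1).
Proof.
  induction n.
  - rewrite sum_O. simpl. apply Ceq; simpl; ring.
  - rewrite sum_Sn. change (plus ?a ?b) with (Cplus a b).
    rewrite Cmult_plus_distr_l, IHn.
    change (pow_n w (S (S n))) with (Cmult w (pow_n w (S n))).
    change (pow_n w (S n)) with (Cmult w (pow_n w n)). ring.
Qed.

Lemma sum_const_C (c : C) (n : nat) : sum_n (fun _ => c) n = Cmult (RtoC (INR (S n))) c.
Proof.
  induction n.
  - rewrite sum_O. simpl. apply Ceq; simpl; ring.
  - rewrite sum_Sn, IHn. change (plus ?a ?b) with (Cplus a b). rewrite (S_INR (S n)).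
    apply Ceq; simpl; ring.
Qed.

Section Char.
Variable b : Z.
Hypothesis Hb : b <> 0%Z.

Lemma absb : INR (Z.abs_nat b) = Rabs (IZR b).
Proof.
  rewrite INR_IZR_INZ, Zabs2Nat.id_abs, <- abs_IZR. reflexivity.
Qed.

Lemma Bpos : (1 <= Z.abs_nat b)%nat.
Proof. lia. Qed.

Lemma char_sum (m : Z) :
  sum_n (fun l => cis (2 * PI * INR l * IZR m / IZR b)) (Z.abs_nat b - 1) =
  if Z.eq_dec (m mod b) 0 then RtoC (INR (Z.abs_nat b)) else RtoC 0.
Proof.
  assert (HbR : IZR b <> 0) by (apply not_0_IZR; auto).
  destruct (Z.eq_dec (m mod b) 0) as [Hd|Hd].
  - apply Z.mod_divide in Hd; auto. destruct Hd as [q Hq]. subst m.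
    rewrite (sum_n_ext _ (fun _ => RtoC 1)).
    + rewrite sum_const_C. replace (S (Z.abs_nat b - 1)) with (Z.abs_nat b) by lia.
      apply Ceq; simpl; ring.
    + intros l. rewrite mult_IZR. replace (2 * PI * INR l * (IZR q * IZR b) / IZR b)
        with (2 * PI * IZR (Z.of_nat l * q)) by (rewrite mult_IZR, <- INR_IZR_INZ; field; auto).
      apply cis_2piZ.
  - set (w := cis (2 * PI * IZR m / IZR b)).
    rewrite (sum_n_ext _ (fun l => pow_n w l)).
    2: { intros l. unfold w. rewrite pow_n_cis. f_equal. field. auto. }
    assert (Hw : w <> RtoC 1).
    { intros Hw. unfold w, cis, RtoC in Hw. injection Hw as Hc Hs.
      apply sin_eq_0_0 in Hs. destruct Hs as [k Hk].
      assert (Hk2 := Z_div_mod_eq_full k 2).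
      assert (Hm2 : (0 <= k mod 2 < 2)%Z) by (apply Z.mod_pos_bound; lia).
      set (q := (k / 2)%Z) in *. set (s := (k mod 2)%Z) in *.
      assert (Hcs : cos (IZR k * PI) = cos (IZR s * PI)).
      { rewrite Hk2, plus_IZR, mult_IZR.
        replace ((2 * IZR q + IZR s) * PI) with (IZR s * PI + 2 * PI * IZR q) by ring.
        rewrite cos_plus. destruct (cos_sin_2piZ q) as [H1 H2]. rewrite H1, H2. ring. }
      rewrite Hk, Hcs in Hc.
      assert (s = 0 \/ s = 1)%Z as [Hs0|Hs1] by lia.
      - rewrite Hs0 in Hk2. apply Hd.
        assert (HPI : PI <> 0) by (pose proof PI_RGT_0; lra).
        assert (H : IZR m = IZR (q * b)).
        { rewrite mult_IZR. transitivity ((2 * PI * IZR m / IZR b) * IZR b / (2 * PI)); [field; auto|].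
          rewrite Hk, Hk2, plus_IZR, mult_IZR. simpl (IZR 0). field. auto. }
        apply eq_IZR in H. rewrite H. apply Z.mod_mul. auto.
      - rewrite Hs1 in Hc. simpl in Hc. rewrite Rmult_1_l, cos_PI in Hc. lra. }
    assert (HwB : pow_n w (S (Z.abs_nat b - 1)) = RtoC 1).
    { unfold w. rewrite pow_n_cis. replace (S (Z.abs_nat b - 1)) with (Z.abs_nat b) by lia.
      rewrite absb. destruct (Rcase_abs (IZR b)) as [Hn|Hp].
      - rewrite Rabs_left by auto. replace (- IZR b * (2 * PI * IZR m / IZR b)) with (2 * PI * IZR (- m))
          by (rewrite opp_IZR; field; auto). apply cis_2piZ.
      - rewrite Rabs_pos_eq by lra. replace (IZR b * (2 * PI * IZR m / IZR b)) with (2 * PI * IZR m)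
          by (field; auto). apply cis_2piZ. }
    assert (Hg := geom_C w (Z.abs_nat b - 1)). rewrite HwB in Hg.
    replace (Cminus (RtoC 1) (RtoC 1)) with (RtoC 0) in Hg by (apply Ceq; simpl; ring).
    assert (Hne : Cminus w (RtoC 1) <> RtoC 0).
    { intros H. apply Hw. replace w with (Cplus (Cminus w (RtoC 1)) (RtoC 1)) by ring. rewrite H.
      apply Ceq; simpl; ring. }
    rewrite <- (Cmult_1_l (sum_n _ _)).
    rewrite <- (Cinv_l _ Hne), <- Cmult_assoc. etransitivity; [apply f_equal; exact Hg|]. apply Ceq; simpl; ring.
Qed.
End Char.

Lemma Csum_mult_l (a : C) (u : nat -> C) (n : nat) :
  sum_n (fun k => Cmult a (u k)) n = Cmult a (sum_n u n).
Proof.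
  induction n.
  - rewrite !sum_O. reflexivity.
  - rewrite !sum_Sn, IHn.
    change (@eq C (Cplus (Cmult a (sum_n u n)) (Cmult a (u (S n)))) (Cmult a (Cplus (sum_n u n) (u (S n))))).
    ring.
Qed.

Lemma sum_last0 (u : nat -> C) (d : nat) : (forall t, (t < d)%nat -> u t = RtoC 0) -> sum_n u d = u d.
Proof.
  intros H. destruct d.
  - apply sum_O.
  - rewrite sum_Sn.
    assert (Hz : sum_n u d = RtoC 0).
    { clear - H. induction d.
      - rewrite sum_O. apply H. lia.
      - rewrite sum_Sn, IHd by (intros; apply H; lia). rewrite (H (S d)) by lia.
        apply Ceq; simpl; ring. }
    rewrite Hz. apply Ceq; simpl; ring.
Qed.

Lemma sym_add (g : Z -> C) (M d : nat) :
  sym_partial g (M + S d) = Cplus (sym_partial g M)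
    (sum_n (fun t => Cplus (g (Z.of_nat (M + S t))) (g (- Z.of_nat (M + S t))%Z)) d).
Proof.
  induction d.
  - rewrite sum_O, Nat.add_1_r, sym_S. ring.
  - replace (M + S (S d))%nat with (S (M + S d)) by lia.
    rewrite sym_S, IHd, sum_Sn. change (plus ?a ?b) with (Cplus a b).
    replace (S (M + S d)) with (M + S (S d))%nat by lia. ring.
Qed.

Section Final.
Variable E : nat -> R -> R.
Hypothesis HE : is_Euler_poly E.
Variables (j : nat) (b r : Z) (x : R).
Hypothesis Hj : (1 <= j)%nat.
Hypothesis Hb : b <> 0%Z.

Definition ff (d : Z) : C :=
  Cdiv (cis (2 * PI * IZR d * x)) (pow_n (RtoC (IZR d + IZR r / IZR b - 1 / (2 * IZR b))) j).
Definition yl (l : nat) : R := (INR l + x) / IZR b.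
Definition coef (l : nat) : C := sc (IZR b ^ j / INR (Z.abs_nat b)) (- (2 * PI * (INR l + x) * IZR r / IZR b)).
Definition hh (m : Z) : C :=
  sum_n (fun l => Cmult (coef l) (vv j (yl l) (r + m)%Z)) (Z.abs_nat b - 1).

Lemma HbR : IZR b <> 0.
Proof. apply not_0_IZR; auto. Qed.

Lemma HBR : INR (Z.abs_nat b) <> 0.
Proof. apply not_0_INR. lia. Qed.

Lemma key (m : Z) : hh m = if Z.eq_dec (m mod b) 0 then ff (m / b) else RtoC 0.
Proof.
  pose proof HbR as HbR. pose proof HBR as HBR.
  set (rho := IZR (r + m) - 1/2).
  assert (Hrho : rho <> 0) by apply half_ne0.
  set (S0 := IZR b ^ j / INR (Z.abs_nat b) * / rho ^ j).
  assert (Ht : forall l, Cmult (coef l) (vv j (yl l) (r + m)%Z) =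
     Cmult (sc S0 (2 * PI * x * IZR m / IZR b)) (cis (2 * PI * INR l * IZR m / IZR b))).
  { intros l. unfold coef, vv. rewrite Cdiv_cis_pow by apply half_ne0. rewrite cis_sc, !sc_mult.
    apply f_equal2.
    - unfold S0, rho. ring.
    - unfold yl. rewrite plus_IZR. field. auto. }
  unfold hh. rewrite (sum_n_ext _ _ _ Ht).
  transitivity (Cmult (sc S0 (2 * PI * x * IZR m / IZR b))
    (sum_n (fun l => cis (2 * PI * INR l * IZR m / IZR b)) (Z.abs_nat b - 1))).
  { apply Csum_mult_l. }
  rewrite char_sum by auto.
  destruct (Z.eq_dec (m mod b) 0) as [Hd|Hd].
  - apply Z_div_exact_full_2 in Hd; auto. set (q := (m / b)%Z) in *.
    unfold ff. rewrite Cdiv_cis_pow.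
    2: { replace (IZR q + IZR r / IZR b - 1 / (2 * IZR b)) with (rho / IZR b).
         - unfold Rdiv. apply Rmult_integral_contrapositive; split; auto. apply Rinv_neq_0_compat; auto.
         - unfold rho. rewrite plus_IZR, Hd, mult_IZR. field. auto. }
    rewrite RtoC_sc, sc_mult. apply f_equal2.
    + replace (IZR q + IZR r / IZR b - 1 / (2 * IZR b)) with (rho * / IZR b)
        by (unfold rho; rewrite plus_IZR, Hd, mult_IZR; field; auto).
      unfold S0. rewrite Rpow_mult_distr, pow_inv. field. split; [apply pow_nonzero; auto|]. split; [apply pow_nonzero; auto|auto].
    + clearbody q. rewrite Hd, mult_IZR. field. auto.
  - apply Ceq; simpl; ring.
Qed.

Lemma filt (M : nat) :
  sum_n (fun l => Cmult (coef l) (Win (vv j (yl l)) r M)) (Z.abs_nat b - 1) = sym_partial hh M.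
Proof.
  unfold Win, sym_partial, hh.
  transitivity (sum_n (fun l => sum_n (fun k => Cmult (coef l) (vv j (yl l) (r + (Z.of_nat k - Z.of_nat M))%Z)) (2 * M)) (Z.abs_nat b - 1)).
  - apply sum_n_ext. intros l. symmetry. apply Csum_mult_l.
  - apply sum_n_switch.
Qed.

Lemma notmult (b0 z t : Z) : (0 < t < Z.abs b0)%Z -> (b0 * z)%Z = t -> False.
Proof.
  intros H1 H2. destruct (Z_le_gt_dec 0 b0).
  - rewrite Z.abs_eq in H1 by lia. destruct (Z_le_gt_dec z 0).
    + assert (b0 * z <= 0)%Z by (apply Z.mul_nonneg_nonpos; lia). lia.
    + assert (b0 * 1 <= b0 * z)%Z by (apply Z.mul_le_mono_nonneg_l; lia). lia.
  - rewrite Z.abs_neq in H1 by lia. destruct (Z_le_gt_dec 0 z).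
    + assert (b0 * z <= 0)%Z by (apply Z.mul_nonpos_nonneg; lia). lia.
    + assert ((- b0) * 1 <= (- b0) * (- z))%Z by (apply Z.mul_le_mono_nonneg_l; lia). lia.
Qed.

Lemma nodiv (N k : nat) : (0 < k < Z.abs_nat b)%nat ->
  (Z.of_nat (Z.abs_nat b * N + k) mod b <> 0)%Z /\ ((- Z.of_nat (Z.abs_nat b * N + k)) mod b <> 0)%Z.
Proof.
  intros Hk. assert (HB : Z.of_nat (Z.abs_nat b) = Z.abs b) by lia.
  assert (Hk' : (0 < Z.of_nat k < Z.abs b)%Z) by lia.
  split; intros H; apply Z.mod_divide in H; auto; destruct H as [q Hq];
    rewrite Nat2Z.inj_add, Nat2Z.inj_mul, HB in Hq;
    (destruct (Z_le_gt_dec 0 b); [rewrite Z.abs_eq in Hq by lia|rewrite Z.abs_neq in Hq by lia]).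
  - apply (notmult b (q - Z.of_nat N) (Z.of_nat k)); auto. lia.
  - apply (notmult b (q + Z.of_nat N) (Z.of_nat k)); auto. lia.
  - apply (notmult b (- q - Z.of_nat N) (Z.of_nat k)); auto. lia.
  - apply (notmult b (Z.of_nat N - q) (Z.of_nat k)); auto. lia.
Qed.

Lemma hh_zero (N k : nat) : (0 < k < Z.abs_nat b)%nat ->
  hh (Z.of_nat (Z.abs_nat b * N + k)) = RtoC 0 /\ hh (- Z.of_nat (Z.abs_nat b * N + k))%Z = RtoC 0.
Proof.
  intros Hk. destruct (nodiv N k Hk) as [H1 H2]. rewrite !key.
  destruct (Z.eq_dec _ 0); [contradiction|]. destruct (Z.eq_dec _ 0); [contradiction|]. auto.
Qed.

Lemma hh_div (N : nat) :
  Cplus (hh (Z.of_nat (Z.abs_nat b * S N))) (hh (- Z.of_nat (Z.abs_nat b * S N))%Z) =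
  Cplus (ff (Z.of_nat (S N))) (ff (- Z.of_nat (S N))%Z).
Proof.
  rewrite !key. rewrite Nat2Z.inj_mul, Zabs2Nat.id_abs.
  destruct (Z_le_gt_dec 0 b).
  - rewrite Z.abs_eq by lia.
    replace (b * Z.of_nat (S N))%Z with (Z.of_nat (S N) * b)%Z by ring.
    replace (- (Z.of_nat (S N) * b))%Z with ((- Z.of_nat (S N)) * b)%Z by ring.
    rewrite !Z.mod_mul, !Z.div_mul by auto. reflexivity.
  - rewrite Z.abs_neq by lia.
    replace (- b * Z.of_nat (S N))%Z with ((- Z.of_nat (S N)) * b)%Z by ring.
    replace (- ((- Z.of_nat (S N)) * b))%Z with (Z.of_nat (S N) * b)%Z by ring.
    rewrite !Z.mod_mul, !Z.div_mul by auto. simpl. ring.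
Qed.

Lemma sym_hh (N : nat) : sym_partial hh (Z.abs_nat b * N) = sym_partial ff N.
Proof.
  induction N.
  - rewrite Nat.mul_0_r. unfold sym_partial. simpl (2 * 0)%nat. rewrite !sum_O.
    simpl (Z.of_nat 0 - Z.of_nat 0)%Z. rewrite key. rewrite Zmod_0_l, Zdiv_0_l. reflexivity.
  - replace (Z.abs_nat b * S N)%nat with (Z.abs_nat b * N + S (Z.abs_nat b - 1))%nat by lia.
    rewrite sym_add, IHN, sum_last0.
    + replace (Z.abs_nat b * N + S (Z.abs_nat b - 1))%nat with (Z.abs_nat b * S N)%nat by lia.
      rewrite hh_div, sym_S. ring.
    + intros t Ht. replace (Z.abs_nat b * N + S t)%nat with (Z.abs_nat b * N + S t)%nat by reflexivity.
      destruct (hh_zero N (S t)) as [H1 H2]; [lia|]. rewrite H1, H2. apply Ceq; simpl; ring.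
Qed.

End Final.

Lemma sc_div (r a D : R) : D <> 0 -> Cdiv (sc r a) (RtoC D) = sc (r / D) a.
Proof. intros H. rewrite Cdiv_RtoC by auto. unfold sc. apply Ceq; simpl; field; auto. Qed.

Lemma final_alg (E : nat -> R -> R) (j : nat) (b r : Z) (x : R) : (1 <= j)%nat -> b <> 0%Z ->
  sum_n (fun l => Cmult (coef j b r x l) (Cmult (Kj j (yl b x l)) (RtoC (kap j * Ebar E (j - 1) (yl b x l)))))
    (Z.abs_nat b - 1) =
  Cmult
    (Cdiv (Cmult (pow_n (Cmult (RtoC (2 * PI)) Ci) j) (RtoC (sgnZ b)))
          (RtoC (2 * INR (fact (j - 1)) * powerRZ (IZR b) (1 - Z.of_nat j))))
    (sum_n (fun l : nat =>
       Cmult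
         (cis (- (2 * PI * (INR l + x) * IZR r / IZR b) + PI * (INR l + x) / IZR b))
         (RtoC (Ebar E (j - 1) ((INR l + x) / IZR b))))
       (Z.abs_nat b - 1)).
Proof.
  intros Hj Hb. assert (HbR : IZR b <> 0) by (apply not_0_IZR; auto).
  destruct j as [|n]; [lia|].
  replace (1 - Z.of_nat (S n))%Z with (- Z.of_nat n)%Z by lia.
  rewrite powerRZ_neg', <- pow_powerRZ.
  assert (HD : 2 * INR (fact (S n - 1)) * / IZR b ^ n <> 0).
  { apply Rmult_integral_contrapositive; split.
    - apply Rmult_integral_contrapositive; split; [lra|apply INR_fact_neq_0].
    - apply Rinv_neq_0_compat, pow_nonzero; auto. }
  rewrite <- Csum_mult_l. apply sum_n_ext. intros l.
  rewrite pow_n_2piI, (RtoC_sc (sgnZ b)), sc_mult, sc_div by auto.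
  rewrite cis_sc, !RtoC_sc. unfold coef, Kj. rewrite !sc_mult.
  apply f_equal2.
  - unfold kap, sgnZ, yl. simpl (S n - 1)%nat. rewrite Nat.sub_0_r.
    rewrite absb, abs_IZR.
    assert (Habs : Rabs (IZR b) <> 0) by (apply Rabs_no_R0; auto).
    rewrite Rpow_mult_distr. simpl pow. field.
    split; [apply pow_nonzero; auto|]. split; [auto|apply INR_fact_neq_0].
  - unfold yl. field. auto.
Qed.

Theorem lemma2p7 (E : nat -> R -> R) (HE : is_Euler_poly E)
  (j : nat) (b r : Z) (Hj : (1 <= j)%nat) (Hb : b <> 0%Z) (x : R) :
  filterlim
    (sym_partial (fun d : Z =>
       Cdiv (cis (2 * PI * IZR d * x))
            (pow_n (RtoC (IZR d + IZR r / IZR b - 1 / (2 * IZR b))) j)))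
    eventually
    (locally
       (Cmult
          (Cdiv (Cmult (pow_n (Cmult (RtoC (2 * PI)) Ci) j) (RtoC (sgnZ b)))
                (RtoC (2 * INR (fact (j - 1)) * powerRZ (IZR b) (1 - Z.of_nat j))))
          (sum_n (fun l : nat =>
             Cmult
               (cis (- (2 * PI * (INR l + x) * IZR r / IZR b)
                     + PI * (INR l + x) / IZR b))
               (RtoC (Ebar E (j - 1) ((INR l + x) / IZR b))))
             (Z.abs_nat b - 1)))).
Proof.
  apply Clim_filterlim.
  rewrite <- final_alg by auto.
  apply Clim_ext with (fun N => sum_n (fun l => Cmult (coef j b r x l) (Win (vv j (yl b x l)) r (Z.abs_nat b * N))) (Z.abs_nat b - 1)).
  { intros N. rewrite filt, sym_hh by auto. reflexivity. }
  apply (Clim_sum (fun l N => Cmult (coef j b r x l) (Win (vv j (yl b x l)) r (Z.abs_nat b * N)))).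
  intros l. apply Clim_mult_l.
  apply (Clim_mul (fun M => Win (vv j (yl b x l)) r M)); [lia|].
  apply Win_lim.
  - intros c sg. apply vv_decay; auto.
  - apply base; auto.
Qed.
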